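(* Let $N\ge 1$ and let $\lambda,\mu$ be complex parameters. Consider fields $x,\widetilde{x},\widehat{x},\widehat{\widetilde{x}}\in\mathbb{C}^N$ with indices taken modulo $N$. Suppose that $x,\widetilde{x},\widehat{x}$ satisfy, for all $k$, $$(E)\qquad \frac{\lambda}{\widetilde{x}_k-x_k}+\frac{\lambda}{x_k-\widetilde{x}_{k-1}}=\frac{\mu}{\widehat{x}_k-x_k}+\frac{\mu}{x_k-\widehat{x}_{k-1}}.$$ Consider the superposition formulas $$(S1)\qquad \mu(\widehat{\widetilde{x}}_k-\widehat{x}_k)(x_{k+1}-\widetilde{x}_k)=\lambda(\widehat{\widetilde{x}}_k-\widetilde{x}_k)(x_{k+1}-\widehat{x}_k),$$ $$(S2)\qquad \mu(\widetilde{x}_{k+1}-x_{k+1})(\widehat{x}_{k+1}-\widehat{\widetilde{x}}_k)=\lambda(\widehat{x}_{k+1}-x_{k+1})(\widetilde{x}_{k+1}-\widehat{\widetilde{x}}_k).$$ Then, by virtue of $(E)$, (S1) and (S2) are equivalent, and if $\widehat{\widetilde{x}}$ is defined by either of them, then for all $k$: $$(E_1)\quad \frac{\lambda}{\widetilde{x}_k-x_k}+\frac{\lambda}{x_{k+1}-\widetilde{x}_k}=\frac{\mu}{\widehat{\widetilde{x}}_k-\widetilde{x}_k}+\frac{\mu}{\widetilde{x}_k-\widehat{\widetilde{x}}_{k-1}},$$ $$(E_2)\quad \frac{\mu}{\widehat{x}_k-x_k}+\frac{\mu}{x_{k+1}-\widehat{x}_k}=\frac{\lambda}{\widehat{\widetilde{x}}_k-\widehat{x}_k}+\frac{\lambda}{\widehat{x}_k-\widehat{\widetilde{x}}_{k-1}},$$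 $$(E_{12})\quad \frac{\lambda}{\widehat{\widetilde{x}}_k-\widehat{x}_k}+\frac{\lambda}{\widehat{x}_{k+1}-\widehat{\widetilde{x}}_k}=\frac{\mu}{\widehat{\widetilde{x}}_k-\widetilde{x}_k}+\frac{\mu}{\widetilde{x}_{k+1}-\widehat{\widetilde{x}}_k}.$$
   Context: These are the corner equations for two Bäcklund transformations $F_\lambda,F_\mu$ of the periodic symmetric rational additive Toda-type system $\ddot x_k=-\dot x_k^2\big(\frac{1}{x_{k+1}-x_k}-\frac{1}{x_k-x_{k-1}}\big)$, where $F_\lambda:(x,p)\mapsto(\widetilde x,\widetilde p)$ is $p_k=\frac{\lambda}{\widetilde x_k-x_k}+\frac{\lambda}{x_k-\widetilde x_{k-1}}$, $\widetilde p_k=\frac{\lambda}{\widetilde x_k-x_k}+\frac{\lambda}{x_{k+1}-\widetilde x_k}$; hats denote the action of $F_\mu$. *)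

(* Defs.v *)
(* Complex numbers are modelled as R[i] = complex R for an
   arbitrary R : realType (a complete archimedean ordered field, i.e. the reals). *)
From HB Require Import structures.
From mathcomp Require Import all_boot all_order all_algebra.
From mathcomp Require Import reals.
From mathcomp Require Export complex.
Set Implicit Arguments. Unset Strict Implicit. Unset Printing Implicit Defensive.
Import Order.TTheory GRing.Theory Num.Theory.
Local Open Scope ring_scope.

(* Indices modulo N: a field on the periodic lattice is a function 'I_N -> C;
   k+1 and k-1 are the cyclic successor / predecessor. *)
Definition nx N (k : 'I_N) : 'I_N := ordS k.
Definition pv N (k : 'I_N) : 'I_N := ord_pred k.

Section Eqs.
Variables (C : fieldType) (N : nat) (lam mu : C) (x xt xh xth : 'I_N -> C).

Definition cornerE (k : 'I_N) : Prop :=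
  lam / (xt k - x k) + lam / (x k - xt (pv k)) =
  mu / (xh k - x k) + mu / (x k - xh (pv k)).
Definition cornerS1 (k : 'I_N) : Prop :=
  mu * (xth k - xh k) * (x (nx k) - xt k) =
  lam * (xth k - xt k) * (x (nx k) - xh k).
Definition cornerS2 (k : 'I_N) : Prop :=
  mu * (xt (nx k) - x (nx k)) * (xh (nx k) - xth k) =
  lam * (xh (nx k) - x (nx k)) * (xt (nx k) - xth k).
(* coefficient of xth_k in (S1) (resp. (S2)) is nonzero, i.e. (S1) (resp. (S2))
   actually defines xth_k *)
Definition definesS1 (k : 'I_N) : Prop :=
  mu * (x (nx k) - xt k) - lam * (x (nx k) - xh k) != 0.
Definition definesS2 (k : 'I_N) : Prop :=
  lam * (xh (nx k) - x (nx k)) - mu * (xt (nx k) - x (nx k)) != 0.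
Definition cornerE1 (k : 'I_N) : Prop :=
  lam / (xt k - x k) + lam / (x (nx k) - xt k) =
  mu / (xth k - xt k) + mu / (xt k - xth (pv k)).
Definition cornerE2 (k : 'I_N) : Prop :=
  mu / (xh k - x k) + mu / (x (nx k) - xh k) =
  lam / (xth k - xh k) + lam / (xh k - xth (pv k)).
Definition cornerE12 (k : 'I_N) : Prop :=
  lam / (xth k - xh k) + lam / (xh (nx k) - xth k) =
  mu / (xth k - xt k) + mu / (xt (nx k) - xth k).
End Eqs.

(* Main.v *)
Require Import Defs.
From mathcomp Require Import all_boot all_order all_algebra.
From mathcomp Require Import reals complex.
From mathcomp Require Import ring.
Import GRing.Theory Num.Theory.
Local Open Scope ring_scope.

Section G.
Variable F : fieldType.

Lemma cancel_nz (p q r : F) : p != 0 -> p * q = p * r -> q = r.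
Proof. by move=> hp /(mulfI hp). Qed.

Lemma S12 (lam mu X1 T0 H0 T1 H1 Y : F) :
  X1 - T0 != 0 -> X1 - H0 != 0 -> T1 - X1 != 0 -> H1 - X1 != 0 ->
  lam / (T1 - X1) + lam / (X1 - T0) = mu / (H1 - X1) + mu / (X1 - H0) ->
  (mu * (Y - H0) * (X1 - T0) = lam * (Y - T0) * (X1 - H0) <->
   mu * (T1 - X1) * (H1 - Y) = lam * (H1 - X1) * (T1 - Y)).
Proof.
move=> ha hb hc hd hE.
set a := X1 - T0 in ha hE *; set b := X1 - H0 in hb hE *.
set c := T1 - X1 in hc hE *; set d := H1 - X1 in hd hE *.
have hK : (mu * a - lam * b) * (c * d) = (lam * d - mu * c) * (a * b).
  have := congr1 (fun z => z * (a * b * c * d)) hE => /=.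
  move=> h. apply/eqP; rewrite -subr_eq0; apply/eqP.
  transitivity ((mu / d + mu / b) * (a * b * c * d) - (lam / c + lam / a) * (a * b * c * d)).
    by field; rewrite ha hb hc hd.
  by rewrite h subrr.
have e1 : (mu * (Y - H0) * a = lam * (Y - T0) * b) <->
          ((mu * a - lam * b) * (Y - X1) = a * b * (lam - mu)).
  split=> h.
    apply/eqP; rewrite -subr_eq0; apply/eqP.
    transitivity (mu * (Y - H0) * a - lam * (Y - T0) * b); last by rewrite h subrr.
    rewrite /a /b; ring.
  apply/eqP; rewrite -subr_eq0; apply/eqP.
  transitivity ((mu * a - lam * b) * (Y - X1) - a * b * (lam - mu)); last by rewrite h subrr.
  rewrite /a /b; ring.
have e2 : (mu * c * (H1 - Y) = lam * d * (T1 - Y)) <->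
          ((lam * d - mu * c) * (Y - X1) = c * d * (lam - mu)).
  split=> h.
    apply/eqP; rewrite -subr_eq0; apply/eqP.
    transitivity (mu * c * (H1 - Y) - lam * d * (T1 - Y)); last by rewrite h subrr.
    rewrite /c /d; ring.
  apply/eqP; rewrite -subr_eq0; apply/eqP.
  transitivity ((lam * d - mu * c) * (Y - X1) - c * d * (lam - mu)); last by rewrite h subrr.
  rewrite /c /d; ring.
rewrite e1 e2; split=> h.
  apply: (@cancel_nz (a * b)); first by rewrite mulf_neq0.
  transitivity ((lam * d - mu * c) * (a * b) * (Y - X1)); first by ring.
  rewrite -hK; transitivity (c * d * ((mu * a - lam * b) * (Y - X1))); first by ring.
  by rewrite h; ring.
apply: (@cancel_nz (c * d)); first by rewrite mulf_neq0.
transitivity ((mu * a - lam * b) * (c * d) * (Y - X1)); first by ring.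
rewrite hK; transitivity (a * b * ((lam * d - mu * c) * (Y - X1))); first by ring.
by rewrite h; ring.
Qed.

Lemma nzK (p q k : F) : k != 0 -> q != 0 -> p = k * q -> p != 0.
Proof. by move=> hk hq ->; rewrite mulf_neq0. Qed.

Lemma K12 (lam mu X1 T0 H0 T1 H1 : F) :
  X1 - T0 != 0 -> X1 - H0 != 0 -> T1 - X1 != 0 -> H1 - X1 != 0 ->
  lam / (T1 - X1) + lam / (X1 - T0) = mu / (H1 - X1) + mu / (X1 - H0) ->
  (mu * (X1 - T0) - lam * (X1 - H0)) * ((T1 - X1) * (H1 - X1)) =
  (lam * (H1 - X1) - mu * (T1 - X1)) * ((X1 - T0) * (X1 - H0)).
Proof.
move=> ha hb hc hd hE.
have h := congr1 (fun z => z * ((X1 - T0) * (X1 - H0) * (T1 - X1) * (H1 - X1))) hE.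
apply/eqP; rewrite -subr_eq0; apply/eqP.
transitivity ((mu / (H1 - X1) + mu / (X1 - H0)) * ((X1 - T0) * (X1 - H0) * (T1 - X1) * (H1 - X1))
  - (lam / (T1 - X1) + lam / (X1 - T0)) * ((X1 - T0) * (X1 - H0) * (T1 - X1) * (H1 - X1))).
  by field; rewrite ha hb hc hd.
by rewrite /= in h; rewrite h subrr.
Qed.

Lemma solveY (lam mu X1 T0 H0 Y : F) :
  mu * (X1 - T0) - lam * (X1 - H0) != 0 ->
  mu * (Y - H0) * (X1 - T0) = lam * (Y - T0) * (X1 - H0) ->
  Y = X1 + (X1 - T0) * (X1 - H0) * (lam - mu) / (mu * (X1 - T0) - lam * (X1 - H0)).
Proof.
move=> hA h.
apply: (@cancel_nz (mu * (X1 - T0) - lam * (X1 - H0))) => //.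
apply/eqP; rewrite -subr_eq0; apply/eqP.
transitivity (mu * (Y - H0) * (X1 - T0) - lam * (Y - T0) * (X1 - H0)).
  by field.
by rewrite h subrr.
Qed.

Lemma solveYp (lam mu X0 T0 H0 Yp : F) :
  lam * (H0 - X0) - mu * (T0 - X0) != 0 ->
  mu * (T0 - X0) * (H0 - Yp) = lam * (H0 - X0) * (T0 - Yp) ->
  Yp = X0 + (T0 - X0) * (H0 - X0) * (lam - mu) / (lam * (H0 - X0) - mu * (T0 - X0)).
Proof.
move=> hA h.
apply: (@cancel_nz (lam * (H0 - X0) - mu * (T0 - X0))) => //.
apply/eqP; rewrite -subr_eq0; apply/eqP.
transitivity (mu * (T0 - X0) * (H0 - Yp) - lam * (H0 - X0) * (T0 - Yp)).
  by field.
by rewrite h subrr.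
Qed.

Lemma LE1 (lam mu X0 T0 H0 X1 Y Yp : F) :
  mu * (X1 - T0) - lam * (X1 - H0) != 0 ->
  mu * (Y - H0) * (X1 - T0) = lam * (Y - T0) * (X1 - H0) ->
  lam * (H0 - X0) - mu * (T0 - X0) != 0 ->
  mu * (T0 - X0) * (H0 - Yp) = lam * (H0 - X0) * (T0 - Yp) ->
  T0 - X0 != 0 -> X1 - T0 != 0 -> Y - T0 != 0 -> T0 - Yp != 0 ->
  X1 - H0 != 0 -> H0 - X0 != 0 ->
  lam / (T0 - X0) + lam / (X1 - T0) = mu / (Y - T0) + mu / (T0 - Yp).
Proof.
move=> hA1 hS1 hA2 hS2 n1 n2 n3 n4 n5 n6.
move: n3 n4; rewrite (solveY _ _ _ _ _ _ hA1 hS1) (solveYp _ _ _ _ _ _ hA2 hS2) => n3 n4.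
have m4 : T0 * (lam * (H0 - X0) - mu * (T0 - X0)) -
      (X0 * (lam * (H0 - X0) - mu * (T0 - X0)) +
       (T0 - X0) * (H0 - X0) * (lam - mu)) != 0.
  have -> : T0 * (lam * (H0 - X0) - mu * (T0 - X0)) -
      (X0 * (lam * (H0 - X0) - mu * (T0 - X0)) +
       (T0 - X0) * (H0 - X0) * (lam - mu)) = (lam * (H0 - X0) - mu * (T0 - X0)) *
    (T0 - (X0 + (T0 - X0) * (H0 - X0) * (lam - mu) / (lam * (H0 - X0) - mu * (T0 - X0)))).
    by field.
  by rewrite mulf_neq0.
have m3 : X1 * (mu * (X1 - T0) - lam * (X1 - H0)) +
      (X1 - T0) * (X1 - H0) * (lam - mu) +
      - T0 * (mu * (X1 - T0) - lam * (X1 - H0)) != 0.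
  have -> : X1 * (mu * (X1 - T0) - lam * (X1 - H0)) +
      (X1 - T0) * (X1 - H0) * (lam - mu) +
      - T0 * (mu * (X1 - T0) - lam * (X1 - H0)) = (mu * (X1 - T0) - lam * (X1 - H0)) *
    (X1 + (X1 - T0) * (X1 - H0) * (lam - mu) / (mu * (X1 - T0) - lam * (X1 - H0)) - T0).
    by field.
  by rewrite mulf_neq0.
by field; rewrite hA1 hA2 n1 n2 m3 m4.
Qed.

Lemma LE12 (lam mu X1 T0 H0 T1 H1 Y : F) :
  X1 - T0 != 0 -> X1 - H0 != 0 -> T1 - X1 != 0 -> H1 - X1 != 0 ->
  lam / (T1 - X1) + lam / (X1 - T0) = mu / (H1 - X1) + mu / (X1 - H0) ->
  mu * (X1 - T0) - lam * (X1 - H0) != 0 ->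
  mu * (Y - H0) * (X1 - T0) = lam * (Y - T0) * (X1 - H0) ->
  Y - T0 != 0 -> Y - H0 != 0 -> T1 - Y != 0 -> H1 - Y != 0 ->
  lam / (Y - H0) + lam / (H1 - Y) = mu / (Y - T0) + mu / (T1 - Y).
Proof.
move=> ha hb hc hd hE hA hS n1 n2 n3 n4.
have hY := solveY _ _ _ _ _ _ hA hS.
have hl : lam != 0.
  apply: contraNneq n2 => l0; rewrite hY l0; apply/eqP; field.
  by move: hA; rewrite l0 mul0r subr0 mulf_eq0 negb_or andbC.
have hD : mu / (H1 - X1) + mu / (X1 - H0) - lam / (X1 - T0) != 0.
  by rewrite -hE addrK mulf_neq0 ?invr_eq0.
have hT : T1 = X1 + lam / (mu / (H1 - X1) + mu / (X1 - H0) - lam / (X1 - T0)).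
  rewrite -hE addrK; field; by rewrite hc hl.
move: n1 n2 n3 n4 hc; rewrite hT hY => n1 n2 n3 n4 hc.
have h5 : (mu * (X1 - H0) + mu * (H1 - X1)) * (X1 - T0) +
      - lam * ((H1 - X1) * (X1 - H0)) != 0.
  apply: (@nzK _ _ ((X1 - T0) * (X1 - H0) * (H1 - X1)) _ hD); first by rewrite !mulf_neq0.
  by field; rewrite ha hb hd.
field; rewrite hA ha hb hd h5 /=.
apply/and4P; split.
- apply: (@nzK _ _ ((mu * (X1 - T0) - lam * (X1 - H0)) * ((mu * (X1 - H0) + mu * (H1 - X1)) * (X1 - T0) +
      - lam * ((H1 - X1) * (X1 - H0)))) _ n3); first by rewrite !mulf_neq0.
  by field; rewrite hA ha hb hd h5.
- apply: (@nzK _ _ ((mu * (X1 - T0) - lam * (X1 - H0))) _ n1) => //.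
  by field; rewrite hA.
- apply: (@nzK _ _ ((mu * (X1 - T0) - lam * (X1 - H0))) _ n4) => //.
  by field; rewrite hA.
- apply: (@nzK _ _ ((mu * (X1 - T0) - lam * (X1 - H0))) _ n2) => //.
  by field; rewrite hA.
Qed.
End G.

Theorem theorem10 (R : realType) (N : nat) (HN : (0 < N)%N)
  (lam mu : R[i]) (x xt xh xth : 'I_N -> R[i])
  (* nondegeneracy: all denominators in (E) are nonzero *)
  (Ht : forall k, xt k - x k != 0) (Ht' : forall k, x k - xt (pv k) != 0)
  (Hh : forall k, xh k - x k != 0) (Hh' : forall k, x k - xh (pv k) != 0)
  (HE : forall k, cornerE lam mu x xt xh k) :
  ((forall k, cornerS1 lam mu x xt xh xth k) <-> (forall k, cornerS2 lam mu x xt xh xth k))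
  /\
  ((* nondegeneracy: all denominators involving xth are nonzero *)
   (forall k, xth k - xt k != 0) -> (forall k, xth k - xh k != 0) ->
   (forall k, xt (nx k) - xth k != 0) -> (forall k, xh (nx k) - xth k != 0) ->
   ((forall k, definesS1 lam mu x xt xh k /\ cornerS1 lam mu x xt xh xth k) \/
    (forall k, definesS2 lam mu x xt xh k /\ cornerS2 lam mu x xt xh xth k)) ->
   forall k, cornerE1 lam mu x xt xth k /\ cornerE2 lam mu x xh xth k
             /\ cornerE12 lam mu xt xh xth k).
Proof.
have pvnx : forall k : 'I_N, pv (nx k) = k by move=> k; rewrite /pv /nx ordSK.
have nxpv : forall k : 'I_N, nx (pv k) = k by move=> k; rewrite /pv /nx ord_predK.
have Ha : forall k, x (nx k) - xt k != 0 by move=> k; have := Ht' (nx k); rewrite pvnx.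
have Hb : forall k, x (nx k) - xh k != 0 by move=> k; have := Hh' (nx k); rewrite pvnx.
have HE' : forall k, lam / (xt (nx k) - x (nx k)) + lam / (x (nx k) - xt k) =
    mu / (xh (nx k) - x (nx k)) + mu / (x (nx k) - xh k).
  by move=> k; have := HE (nx k); rewrite /cornerE pvnx.
have eq12 : forall k, cornerS1 lam mu x xt xh xth k <-> cornerS2 lam mu x xt xh xth k.
  move=> k; rewrite /cornerS1 /cornerS2; exact: (S12 _ _ _ _ _ _ _ _ _ (Ha k) (Hb k) (Ht (nx k)) (Hh (nx k)) (HE' k)).
have A12 : forall k, definesS1 lam mu x xt xh k <-> definesS2 lam mu x xt xh k.
  move=> k; rewrite /definesS1 /definesS2.
  have hK := K12 _ _ _ _ _ _ _ _ (Ha k) (Hb k) (Ht (nx k)) (Hh (nx k)) (HE' k).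
  split=> h; apply/eqP=> h0.
    move: hK; rewrite h0 mul0r => /eqP; rewrite mulf_eq0 (negbTE h) /=.
    by rewrite mulf_eq0 (negbTE (Ht (nx k))) (negbTE (Hh (nx k))).
  move: hK; rewrite h0 mul0r => /esym /eqP; rewrite mulf_eq0 (negbTE h) /=.
  by rewrite mulf_eq0 (negbTE (Ha k)) (negbTE (Hb k)).
split.
  by split=> h k; apply/eq12.
move=> n1 n2 n3 n4 hor.
have hall : forall k, definesS1 lam mu x xt xh k /\ cornerS1 lam mu x xt xh xth k.
  case: hor => h k; first exact: h.
  by case: (h k) => h1 h2; split; [apply/A12 | apply/eq12].
move=> k.
have [hA1 hS1] := hall k.
have [hA2p hS2p] : definesS2 lam mu x xt xh (pv k) /\ cornerS2 lam mu x xt xh xth (pv k).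
  by case: (hall (pv k)) => h1 h2; split; [apply/A12 | apply/eq12].
move: hA2p hS2p; rewrite /definesS2 /cornerS2 nxpv => hA2p hS2p.
have m3 : xt k - xth (pv k) != 0 by have := n3 (pv k); rewrite nxpv.
have m4 : xh k - xth (pv k) != 0 by have := n4 (pv k); rewrite nxpv.
split; last split.
- exact: (LE1 _ _ _ _ _ _ _ _ _ hA1 hS1 hA2p hS2p (Ht k) (Ha k) (n1 k) m3 (Hb k) (Hh k)).
- apply: (LE1 _ mu lam (x k) (xh k) (xt k) (x (nx k)) (xth k) (xth (pv k))).
  + by move: hA1; rewrite /definesS1 -oppr_eq0 opprB.
  + by rewrite /cornerS1 in hS1; rewrite hS1.
  + by move: hA2p; rewrite -oppr_eq0 opprB.
  + by rewrite hS2p.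
  + exact: Hh.
  + exact: Hb.
  + exact: n2.
  + exact: m4.
  + exact: Ha.
  + exact: Ht.
- exact: (LE12 _ _ _ _ _ _ _ _ _ (Ha k) (Hb k) (Ht (nx k)) (Hh (nx k)) (HE' k) hA1 hS1
     (n1 k) (n2 k) (n3 k) (n4 k)).
Qed.
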